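(* Let $(M,\underline{g})$ be a stationary axisymmetric vacuum spacetime with line element, in coordinates $(t,\rho,z,\phi)$, $$\underline{g}=k^2e^{-2\psi}\left[e^{2\gamma}\left(d\rho^2+dz^2\right)+R^2d\phi^2\right]-e^{2\psi}\left(dt-\omega\, d\phi\right)^2,$$ where $k$ is a real constant and $\psi,\gamma,\omega,R$ are smooth functions of $(\rho,z)$ only. Suppose $\eta=C_1\partial_t+C_2\partial_\rho+C_3\partial_z+C_4\partial_\phi$ satisfies $\mathcal{L}_\eta\underline{g}=2\Psi\,\underline{g}$ for a constant $\Psi$, where each component $C_i=C_i(t,\rho)$ is a function of $t$ and $\rho$ only, and suppose $C_2$ and $C_3$ are constants with $C_2=C_3=0$. Then $\Psi=0$, i.e. $\eta$ is a Killing vector, and $\eta=c_1\partial_t+c_4\partial_\phi$ for constants $c_1,c_4$.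
   Context: The metric components are $\underline{g}_{tt}=-e^{2\psi}$, $\underline{g}_{t\phi}=\omega e^{2\psi}$, $\underline{g}_{\rho\rho}=\underline{g}_{zz}=k^2e^{2(\gamma-\psi)}$, and $\underline{g}_{\phi\phi}=W:=k^2R^2e^{-2\psi}-\omega^2e^{2\psi}$. The metric is assumed nondegenerate. The spacetime is a vacuum solution of Einstein's equations, constructed from a complex Ernst potential $\mathcal{E}$ with $\mathrm{Re}(\mathcal{E})=e^{2\psi}$ satisfying $\mathrm{Re}(\mathcal{E})\bar\nabla^2\mathcal{E}=\bar\nabla\mathcal{E}\cdot\bar\nabla\mathcal{E}$ with $\bar\nabla^2=\partial_{\rho\rho}+\rho^{-1}\partial_\rho+\partial_{zz}$, $\bar\nabla=(\partial_\rho,\partial_z)$, and $R$ satisfies $R_{,\rho\rho}+R_{,zz}=0$. A vector field with $\mathcal{L}_\eta\underline{g}=2\Psi\underline{g}$, $\Psi$ constant, is called homothetic; if $\Psi=0$ it is a Killing vector. *)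

(* Defs.v *)
From HB Require Import structures.
From mathcomp Require Import all_boot all_order all_algebra.
From mathcomp Require Import all_classical all_reals all_analysis.
Set Implicit Arguments. Unset Strict Implicit. Unset Printing Implicit Defensive.
Import Order.TTheory GRing.Theory Num.Theory.
Import numFieldNormedType.Exports.
Local Open Scope classical_set_scope.
Local Open Scope ring_scope.

Fixpoint iterD (R : realType) (V : normedModType R) (ds : seq V) (f : V -> R^o)
  : V -> R^o :=
  match ds with
  | [::] => f
  | d :: ds' => fun x => 'D_d (iterD ds' f) x
  end.

Definition smooth_on (R : realType) (V : normedModType R) (U : set V)
  (f : V -> R^o) : Prop :=
  forall (ds : seq V) (x : V), U x -> differentiable (iterD ds f) x.

Definition lift2 (R : realType) (f : R -> R -> R) : 'rV[R]_2 -> R^o :=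
  fun v => f (v ord0 ord0) (v ord0 (@Ordinal 2 1 isT)).

Definition pt2 (R : realType) (a b : R) : 'rV[R]_2 :=
  \row_(j < 2) (if val j == 0%N then a else b).

Definition pd2 (R : realType) (i : 'I_2) (f : R -> R -> R) : R -> R -> R :=
  fun a b => 'D_(delta_mx ord0 i : 'rV[R]_2) (lift2 f) (pt2 a b).

Definition i0 : 'I_2 := ord0.
Definition i1 : 'I_2 := @Ordinal 2 1 isT.

(* The half plane rho > 0 (first variable positive), used both for (rho,z)
   and for (t,rho) (second variable positive). *)
Definition first_pos (R : realType) : set 'rV[R]_2 := [set v | 0 < v ord0 i0].
Definition second_pos (R : realType) : set 'rV[R]_2 := [set v | 0 < v ord0 i1].

Definition ct : 'I_4 := @Ordinal 4 0 isT.
Definition crho : 'I_4 := @Ordinal 4 1 isT.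
Definition cz : 'I_4 := @Ordinal 4 2 isT.
Definition cphi : 'I_4 := @Ordinal 4 3 isT.

(* Metric components g_{ab}(x) of
   k^2 e^{-2psi}[e^{2gamma}(drho^2+dz^2)+R^2 dphi^2] - e^{2psi}(dt - omega dphi)^2 *)
Definition metric (R : realType) (k : R) (psi gam om Rf : R -> R -> R)
  (a b : 'I_4) (x : 'rV[R]_4) : R :=
  let r := x ord0 crho in let z := x ord0 cz in
  let e2psi := expR (2 * psi r z) in
  if (val a == 0%N) && (val b == 0%N) then - e2psi
  else if ((val a == 0%N) && (val b == 3%N)) || ((val a == 3%N) && (val b == 0%N))
  then om r z * e2psi
  else if ((val a == 1%N) && (val b == 1%N)) || ((val a == 2%N) && (val b == 2%N))
  then k ^+ 2 * expR (2 * (gam r z - psi r z))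
  else if (val a == 3%N) && (val b == 3%N)
  then k ^+ 2 * (Rf r z) ^+ 2 * expR (- (2 * psi r z)) - (om r z) ^+ 2 * e2psi
  else 0.

Definition metric_mx (R : realType) (k : R) (psi gam om Rf : R -> R -> R)
  (x : 'rV[R]_4) : 'M[R]_4 :=
  \matrix_(a < 4, b < 4) metric k psi gam om Rf a b x.

Definition pd4 (R : realType) (c : 'I_4) (f : 'rV[R]_4 -> R^o) (x : 'rV[R]_4) : R :=
  'D_(delta_mx ord0 c : 'rV[R]_4) f x.

Definition lie_deriv (R : realType) (eta : 'I_4 -> 'rV[R]_4 -> R^o)
  (g : 'I_4 -> 'I_4 -> 'rV[R]_4 -> R^o) (a b : 'I_4) (x : 'rV[R]_4) : R :=
  \sum_(c < 4) (eta c x * pd4 c (g a b) x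
               + g c b x * pd4 a (eta c) x
               + g a c x * pd4 b (eta c) x).

(* eta = C_1 d_t + C_2 d_rho + C_3 d_z + C_4 d_phi with C_i = C_i(t, rho);
   here C : 'I_4 -> R -> R -> R, C i t rho (index i = 0..3 for C_1..C_4). *)
Definition vfield (R : realType) (C : 'I_4 -> R -> R -> R) (c : 'I_4)
  (x : 'rV[R]_4) : R := C c (x ord0 ct) (x ord0 crho).

Definition lap_axi (R : realType) (f : R -> R -> R) (r z : R) : R :=
  pd2 i0 (pd2 i0 f) r z + r^-1 * pd2 i0 f r z + pd2 i1 (pd2 i1 f) r z.

Definition grad_dot (R : realType) (f h : R -> R -> R) (r z : R) : R :=
  pd2 i0 f r z * pd2 i0 h r z + pd2 i1 f r z * pd2 i1 h r z.

(* Ernst equation Re(E) lap E = grad E . grad E for E = a + i b, written out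
   in real and imaginary parts. *)
Definition ernst_eq (R : realType) (a b : R -> R -> R) (r z : R) : Prop :=
  a r z * lap_axi a r z = grad_dot a a r z - grad_dot b b r z /\
  a r z * lap_axi b r z = 2 * grad_dot a b r z.

(* Main.v *)
Require Import Defs.
From HB Require Import structures.
From mathcomp Require Import all_boot all_order all_algebra.
From mathcomp Require Import all_classical all_reals all_analysis.
From mathcomp Require Import ring lra.
Import Order.TTheory GRing.Theory Num.Theory.
Import numFieldNormedType.Exports.
Local Open Scope classical_set_scope.
Local Open Scope ring_scope.

Lemma Dconst (R : realType) (V : normedModType R) (f : V -> R^o) a v :
  (forall h : R, f (h *: v + a) = f a) -> 'D_v f a = 0.
Proof.
move=> H; rewrite /derive.
have -> : (fun h : R => h^-1 *: ((f \o shift a) (h *: v) - f a)) = fun=> 0.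
  by apply/funext => h /=; rewrite /shift H subrr scaler0.
exact: lim_cst.
Qed.

Lemma Dtransfer (R : realType) (V U : normedModType R) (f : V -> R^o) (g : U -> R^o) a b v u :
  (forall h : R, f (h *: v + a) = g (h *: u + b)) ->
  'D_v f a = 'D_u g b /\ (derivable f a v <-> derivable g b u).
Proof.
move=> H; rewrite /derive /derivable.
have fg : f a = g b by have := H 0; rewrite !scale0r !add0r.
have -> : (fun h : R => h^-1 *: ((f \o shift a) (h *: v) - f a)) =
          (fun h : R => h^-1 *: ((g \o shift b) (h *: u) - g b)).
  by apply/funext => h /=; rewrite /shift H fg.
by [].
Qed.

Lemma sum4 (R : realType) (F : 'I_4 -> R) :
  \sum_(c < 4) F c = F ct + F crho + F cz + F cphi.
Proof.
rewrite !big_ord_recl big_ord0 addr0 !addrA.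
by congr (_ + _ + _ + _); congr F; apply: val_inj.
Qed.


Lemma e0 {R : realType} (c d : 'I_4) (x : 'rV[R]_4) (h : R) :
  (val c != val d)%N -> (h *: delta_mx ord0 c + x) ord0 d = x ord0 d.
Proof.
move=> cd; have cd' : (d == c) = false by apply/eqP => E; move: cd; rewrite E eqxx.
by rewrite !mxE eqxx cd' mulr0 add0r.
Qed.

Lemma ord4_cases (j : 'I_4) : j = ct \/ j = crho \/ j = cz \/ j = cphi.
Proof.
case: j => [[|[|[|[|j]]]] Hj].
- by left; apply: val_inj.
- by right; left; apply: val_inj.
- by right; right; left; apply: val_inj.
- by right; right; right; apply: val_inj.
- by [].
Qed.

Lemma det_row1 (R : realType) (A : 'M[R]_4) : (forall j, A crho j = 0) -> \det A == 0.
Proof.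
move=> H; apply/det0P; exists (delta_mx 0 crho).
  apply/eqP => /matrixP /(_ 0 crho); rewrite !mxE !eqxx /=.
  by move/eqP; rewrite oner_eq0.
by rewrite -rowE; apply/rowP => j; rewrite !mxE H.
Qed.

Lemma det_block (R : realType) (A : 'M[R]_4) :
  A ct crho = 0 -> A ct cz = 0 -> A cphi crho = 0 -> A cphi cz = 0 ->
  A cphi ct = A ct cphi -> A ct ct != 0 ->
  A ct ct * A cphi cphi - A ct cphi * A ct cphi = 0 -> \det A == 0.
Proof.
move=> h1 h2 h3 h4 h5 h6 h7; apply/det0P.
exists (A ct cphi *: delta_mx 0 ct - A ct ct *: delta_mx 0 cphi).
  have ne : (cphi == ct) = false by apply/eqP => /(congr1 val).
  apply: contra h6 => /eqP /matrixP /(_ 0 cphi); rewrite !mxE !eqxx ne /=.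
  by rewrite mulr0 mulr1 sub0r => /eqP; rewrite oppr_eq0.
rewrite mulmxBl -!scalemxAl -!rowE; apply/rowP => j; rewrite !mxE.
case: (ord4_cases j) => [->|[->|[->|->]]].
- by rewrite h5 mulrC subrr.
- by rewrite h1 h3 !mulr0 subrr.
- by rewrite h2 h4 !mulr0 subrr.
- by rewrite -opprB h7 oppr0.
Qed.

Lemma solve2 (R : realType) (p q s a b : R) :
  p * a + q * b = 0 -> q * a + s * b = 0 -> p * s - q * q != 0 -> a = 0 /\ b = 0.
Proof.
move=> e1 e2 D.
have ha : a * (p * s - q * q) = 0.
  have -> : a * (p * s - q * q) = s * (p * a + q * b) - q * (q * a + s * b) by ring.
  by rewrite e1 e2; ring.
have hb : b * (p * s - q * q) = 0.
  have -> : b * (p * s - q * q) = p * (q * a + s * b) - q * (p * a + q * b) by ring.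
  by rewrite e1 e2; ring.
move: ha hb => /eqP; rewrite mulf_eq0 (negbTE D) orbF => /eqP -> /eqP.
by rewrite mulf_eq0 (negbTE D) orbF => /eqP ->.
Qed.

Lemma cst_pos (R : realType) (f : R -> R) :
  (forall s : R, 0 < s -> is_derive s 1 f 0) -> forall x y, 0 < x -> 0 < y -> f x = f y.
Proof.
move=> Hd x y x0 y0.
wlog xLy : x y x0 y0 / x <= y.
  move=> H; case: (leP x y) => xy; first exact: H.
  by symmetry; apply: H => //; apply: ltW.
have H1 : forall z, z \in `]x, y[ -> is_derive z 1 f ((fun=> 0) z).
  move=> z; rewrite in_itv /= => /andP [xz _]; apply: Hd; exact: lt_trans x0 xz.
have H2 : {within `[x, y], continuous f}.
  apply: derivable_within_continuous => z; rewrite in_itv /= => /andP [xz _].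
  by have [dz _] := Hd z (lt_le_trans x0 xz).
have [c _ E] := @MVT_segment R f (fun=> 0) x y xLy H1 H2.
by move: E; rewrite mul0r => /eqP; rewrite subr_eq0 => /eqP.
Qed.

Lemma metric_dep (R : realType) (k : R) (psi gam om Rf : R -> R -> R) a b (x y : 'rV[R]_4) :
  y ord0 crho = x ord0 crho -> y ord0 cz = x ord0 cz ->
  metric k psi gam om Rf a b y = metric k psi gam om Rf a b x.
Proof. by rewrite /metric => -> ->. Qed.

Lemma lie_simpl (R : realType) (g : 'I_4 -> 'I_4 -> 'rV[R]_4 -> R^o)
  (eta : 'I_4 -> 'rV[R]_4 -> R^o) x a b :
  pd4 ct (g a b) x = 0 -> pd4 cphi (g a b) x = 0 ->
  eta crho x = 0 -> eta cz x = 0 ->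
  (forall d, pd4 d (eta crho) x = 0) -> (forall d, pd4 d (eta cz) x = 0) ->
  lie_deriv eta g a b x =
  g ct b x * pd4 a (eta ct) x + g cphi b x * pd4 a (eta cphi) x
  + g a ct x * pd4 b (eta ct) x + g a cphi x * pd4 b (eta cphi) x.
Proof.
move=> h1 h2 h3 h4 h5 h6.
rewrite /lie_deriv sum4 h1 h2 h3 h4 !h5 !h6 !mulr0 !mul0r !add0r !addr0.
ring.
Qed.

Lemma en0 {R : realType} {n} (c d : 'I_n.+1) (x : 'rV[R]_n.+1) (h : R) :
  (val c != val d)%N -> (h *: delta_mx ord0 c + x) ord0 d = x ord0 d.
Proof.
move=> cd; have cd' : (d == c) = false by apply/eqP => E; move: cd; rewrite E eqxx.
by rewrite !mxE eqxx cd' mulr0 add0r.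
Qed.

Lemma en1 {R : realType} {n} (c : 'I_n.+1) (x : 'rV[R]_n.+1) (h : R) :
  (h *: delta_mx ord0 c + x) ord0 c = h + x ord0 c.
Proof. by rewrite !mxE !eqxx mulr1. Qed.

Lemma alg {R : realType} (p q q' s z1 z2 u1 u2 At Bt Ar Br m1 m2 m3 m4 : R) :
  q' = q -> z1 = 0 -> z2 = 0 -> u1 = 0 -> u2 = 0 -> p * s - q * q != 0 ->
  p * At + q' * Bt + p * At + q * Bt = 2 * 0 * m1 ->
  q * At + s * Bt + p * u1 + q * u2 = 2 * 0 * m2 ->
  p * Ar + q' * Br + z1 * At + z2 * Bt = 2 * 0 * m3 ->
  q * Ar + s * Br + z1 * u1 + z2 * u2 = 2 * 0 * m4 ->
  [/\ At = 0, Bt = 0, Ar = 0 & Br = 0].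
Proof.
move=> -> -> -> -> -> D e1 e2 e3 e4.
have e1' : p * At + q * Bt = 0.
  have : 2 * (p * At + q * Bt) = 0 by rewrite -[RHS](mulr0 2) -[in RHS](mul0r m1) mulrA -e1; ring.
  by move/eqP; rewrite mulf_eq0 pnatr_eq0 /= => /eqP.
have e2' : q * At + s * Bt = 0 by rewrite -[RHS](mul0r m2) -[in RHS](mulr0 2) -e2; ring.
have e3' : p * Ar + q * Br = 0 by rewrite -[RHS](mul0r m3) -[in RHS](mulr0 2) -e3; ring.
have e4' : q * Ar + s * Br = 0 by rewrite -[RHS](mul0r m4) -[in RHS](mulr0 2) -e4; ring.
have [-> ->] := @solve2 _ _ _ _ _ _ e1' e2' D.
by have [-> ->] := @solve2 _ _ _ _ _ _ e3' e4' D.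
Qed.
Arguments alg {R p q q' s z1 z2 u1 u2 At Bt Ar Br m1 m2 m3 m4}.

Theorem proposition5 (R : realType) (k : R) (psi gam om Rf Eim : R -> R -> R)
  (C : 'I_4 -> R -> R -> R) (Psi : R) :
  (* smoothness of the metric functions on the domain rho > 0 *)
  smooth_on (@first_pos R) (lift2 psi) ->
  smooth_on (@first_pos R) (lift2 gam) ->
  smooth_on (@first_pos R) (lift2 om) ->
  smooth_on (@first_pos R) (lift2 Rf) ->
  (* vacuum: Ernst potential E = e^{2 psi} + i Eim satisfying the Ernst equation *)
  smooth_on (@first_pos R) (lift2 Eim) ->
  (forall r z, 0 < r -> ernst_eq (fun r z => expR (2 * psi r z)) Eim r z) ->
  (* R harmonic *)
  (forall r z, 0 < r -> pd2 i0 (pd2 i0 Rf) r z + pd2 i1 (pd2 i1 Rf) r z = 0) ->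
  (* nondegenerate metric *)
  (forall x : 'rV[R]_4, 0 < x ord0 crho -> \det (metric_mx k psi gam om Rf x) != 0) ->
  (* components C_i(t, rho), smooth *)
  (forall i, smooth_on (@second_pos R) (lift2 (C i))) ->
  (* C_2 = C_3 = 0 *)
  (forall t r, C crho t r = 0) ->
  (forall t r, C cz t r = 0) ->
  (* homothety equation L_eta g = 2 Psi g *)
  (forall (x : 'rV[R]_4) (a b : 'I_4), 0 < x ord0 crho ->
     lie_deriv (vfield C) (metric k psi gam om Rf) a b x
     = 2 * Psi * metric k psi gam om Rf a b x) ->
  Psi = 0 /\
  exists c1 c4 : R, forall t r, 0 < r -> C ct t r = c1 /\ C cphi t r = c4.
Proof.
move=> _ _ _ _ _ _ _ Hdet HC HC2 HC3 Hlie.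
pose pt4 (t r : R) : 'rV[R]_4 :=
  \row_(j < 4) (if val j == 0%N then t else if val j == 1%N then r else 0).
have pt4t t r : pt4 t r ord0 ct = t by rewrite /pt4 mxE.
have pt4r t r : pt4 t r ord0 crho = r by rewrite /pt4 mxE.
pose g := metric k psi gam om Rf.
have Fg x a b : pd4 ct (g a b) x = 0 /\ pd4 cphi (g a b) x = 0.
  by split; apply: Dconst => h; apply: metric_dep; apply: e0.
have Fvz x c : pd4 cz (vfield C c) x = 0.
  by apply: Dconst => h; rewrite /vfield (e0 cz ct) // (e0 cz crho).
have Fvp x c : pd4 cphi (vfield C c) x = 0.
  by apply: Dconst => h; rewrite /vfield (e0 cphi ct) // (e0 cphi crho).
have Z2 x d : pd4 d (vfield C crho) x = 0.
  by apply: Dconst => h; rewrite /vfield !HC2.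
have Z3 x d : pd4 d (vfield C cz) x = 0.
  by apply: Dconst => h; rewrite /vfield !HC3.
have LS x a b := @lie_simpl R g (vfield C) x a b (Fg x a b).1 (Fg x a b).2
  (HC2 _ _) (HC3 _ _) (Z2 x) (Z3 x).
have k0 : k != 0.
  apply/negP => /eqP k0; move: (Hdet (pt4 0 1)); rewrite pt4r ltr01 => /(_ isT).
  apply/negP; rewrite negbK; apply: det_row1 => j; rewrite mxE /metric k0.
  by case: (ord4_cases j) => [->|[->|[->|->]]] //=; rewrite expr2 !mul0r.
have Psi0 : Psi = 0.
  have := Hlie (pt4 0 1) cz cz; rewrite pt4r ltr01 => /(_ isT).
  rewrite LS !Fvz !mulr0 !addr0 /metric /=.
  move/esym/eqP; rewrite !mulf_eq0 pnatr_eq0 /=.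
  by rewrite (negbTE k0) (gt_eqF (expR_gt0 _)) !orbF => /eqP.
subst Psi; split => //.
have Dz (x : 'rV[R]_4) : 0 < x ord0 crho -> [/\ pd4 ct (vfield C ct) x = 0, pd4 ct (vfield C cphi) x = 0,
   pd4 crho (vfield C ct) x = 0 & pd4 crho (vfield C cphi) x = 0].
  move=> xr.
  have gne : g ct ct x * g cphi cphi x - g ct cphi x * g ct cphi x != 0.
    apply: contra (Hdet x xr) => /eqP E; apply: det_block; rewrite ?mxE.
    - by rewrite /metric /=.
    - by rewrite /metric /=.
    - by rewrite /metric /=.
    - by rewrite /metric /=.
    - by rewrite /metric /=.
    - by rewrite /metric /= oppr_eq0 gt_eqF ?expR_gt0.
    - exact: E.
  have s30 : g cphi ct x = g ct cphi x by rewrite /g /metric /=.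
  have z10 : g crho ct x = 0 by rewrite /g /metric /=.
  have z13 : g crho cphi x = 0 by rewrite /g /metric /=.
  have E00 := Hlie x ct ct xr; rewrite LS in E00.
  have E03 := Hlie x ct cphi xr; rewrite LS in E03.
  have E10 := Hlie x crho ct xr; rewrite LS in E10.
  have E13 := Hlie x crho cphi xr; rewrite LS in E13.
  exact: (alg s30 z10 z13 (Fvp x ct) (Fvp x cphi) gne E00 E03 E10 E13).
have pt2a a b : pt2 a b ord0 i0 = a by rewrite /pt2 mxE.
have pt2b a b : pt2 a b ord0 i1 = b by rewrite /pt2 mxE.
have sc1 (h : R) : h *: (1 : R) = h by rewrite -[h *: 1]/(h * 1) mulr1.
have DD c : c = ct \/ c = cphi -> forall t r : R, 0 < r ->
    is_derive t 1 (fun s => C c s r) 0 /\ is_derive r 1 (fun s => C c t s) 0.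
  move=> hc t r r0.
  have xr : 0 < pt4 t r ord0 crho by rewrite pt4r.
  have [At Bt Ar Br] := Dz _ xr.
  have dC : differentiable (lift2 (C c)) (pt2 t r).
    by apply: (HC c [::]); rewrite /second_pos /= pt2b.
  split.
  - have q1 (h : R) : C c (h *: 1 + t) r = vfield C c (h *: delta_mx ord0 ct + pt4 t r).
      by rewrite /vfield en1 (en0 ct crho) // pt4t pt4r sc1.
    have [D1 _] := @Dtransfer R R^o _ (fun s => C c s r) (vfield C c) t (pt4 t r) 1
      (delta_mx ord0 ct) q1.
    have q2 (h : R) : C c (h *: 1 + t) r = lift2 (C c) (h *: delta_mx ord0 i0 + pt2 t r).
      by rewrite /lift2 en1 (en0 i0 i1) // pt2a pt2b sc1.
    have [_ dv] := @Dtransfer R R^o _ (fun s => C c s r) (lift2 (C c)) t (pt2 t r) 1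
      (delta_mx ord0 i0) q2.
    apply: DeriveDef; first by apply/dv; exact: diff_derivable.
    by rewrite D1; case: hc => ->.
  - have q1 (h : R) : C c t (h *: 1 + r) = vfield C c (h *: delta_mx ord0 crho + pt4 t r).
      by rewrite /vfield en1 (en0 crho ct) // pt4t pt4r sc1.
    have [D1 _] := @Dtransfer R R^o _ (fun s => C c t s) (vfield C c) r (pt4 t r) 1
      (delta_mx ord0 crho) q1.
    have q2 (h : R) : C c t (h *: 1 + r) = lift2 (C c) (h *: delta_mx ord0 i1 + pt2 t r).
      by rewrite /lift2 en1 (en0 i1 i0) // pt2a pt2b sc1.
    have [_ dv] := @Dtransfer R R^o _ (fun s => C c t s) (lift2 (C c)) r (pt2 t r) 1
      (delta_mx ord0 i1) q2.
    apply: DeriveDef; first by apply/dv; exact: diff_derivable.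
    by rewrite D1; case: hc => ->.
exists (C ct 0 1), (C cphi 0 1) => t r r0.
have T c : c = ct \/ c = cphi -> C c t r = C c 0 1.
  move=> hc.
  rewrite (@is_derive_0_is_cst R (fun s => C c s r) t 0 (fun s => (DD c hc s r r0).1)).
  exact: (@cst_pos R (fun s => C c 0 s) (fun s s0 => (DD c hc 0 s s0).2) r 1 r0 ltr01).
by split; apply: T; [left|right].
Qed.
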